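(* Fix $b\in\{0,1,\dots,|\mathbf d|\}$. Then on $\mathcal M^\bullet$, for all $r,s\in\mathbb Z_m$: $\{(\Phi^{(b)}_s)_{ij},(X_r)_{kl}\}=\tfrac12\delta_{r+1,s}\big((X_r)_{kj}(\Phi^{(b)}_s)_{il}+(X_r\Phi^{(b)}_s)_{kj}\delta_{il}\big)-\tfrac12\delta_{rs}\big(\delta_{kj}(\Phi^{(b)}_sX_r)_{il}+(\Phi^{(b)}_s)_{kj}(X_r)_{il}\big)$, $\{(\Phi^{(b)}_s)_{ij},(Y_r)_{kl}\}=\tfrac12\delta_{rs}\big((Y_r)_{kj}(\Phi^{(b)}_s)_{il}+(Y_r\Phi^{(b)}_s)_{kj}\delta_{il}\big)-\tfrac12\delta_{r+1,s}\big(\delta_{kj}(\Phi^{(b)}_sY_r)_{il}+(\Phi^{(b)}_s)_{kj}(Y_r)_{il}\big)$; for all $s\in\mathbb Z_m$ and all spin indices $(r,\beta)\le\rho(b)$: $\{(\Phi^{(b)}_s)_{ij},(V_{r,\beta})_l\}=\tfrac12\delta_{rs}\big((V_{r,\beta})_j(\Phi^{(b)}_s)_{il}+(V_{r,\beta}\Phi^{(b)}_s)_j\delta_{il}\big)$, $\{(\Phi^{(b)}_s)_{ij},(W_{r,\beta})_k\}=-\tfrac12\delta_{rs}\big(\delta_{kj}(\Phi^{(b)}_sW_{r,\beta})_i+(\Phi^{(b)}_s)_{kj}(W_{r,\beta})_i\big)$; and for every $c\in\{0,\dots,|\mathbf d|\}$ with $c<b$ and all $r,s\in\mathbb Z_m$: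 $\{(\Phi^{(b)}_s)_{ij},(\Phi^{(c)}_r)_{kl}\}=\tfrac12\delta_{rs}\big((\Phi^{(c)}_r)_{kj}(\Phi^{(b)}_s)_{il}+(\Phi^{(c)}_r\Phi^{(b)}_s)_{kj}\delta_{il}\big)-\tfrac12\delta_{rs}\big(\delta_{kj}(\Phi^{(b)}_s\Phi^{(c)}_r)_{il}+(\Phi^{(b)}_s)_{kj}(\Phi^{(c)}_r)_{il}\big)$.
   Context: Fix integers $m\ge2$, $n\ge1$ and $\mathbf d=(d_0,\dots,d_{m-1})\in\mathbb N^m$ with $d_0\ge1$; $|\mathbf d|=\sum_sd_s$. Indices $r,s$ range over $\mathbb Z_m$, identified with $\{0,\dots,m-1\}$ with its usual order; Kronecker deltas of such indices are taken modulo $m$. A spin index is a pair $(s,\alpha)$ with $s\in\mathbb Z_m$, $1\le\alpha\le d_s$; spin indices are totally ordered by $(s,\alpha)<(r,\beta)$ iff $s<r$, or $s=r$ and $\alpha<\beta$. Let $\rho:\{1,\dots,|\mathbf d|\}\to\{\text{spin indices}\}$ be the unique order-preserving bijection; by convention no spin index satisfies $(s,\alpha)\le\rho(0)$. $\mathcal M^\bullet$ is the smooth affine variety of tuples $(X_s,Y_s,V_{s,\alpha},W_{s,\alpha})$, $X_s,Y_s\in\mathrm{Mat}(n\times n,\mathbb C)$, $V_{s,\alpha}\in\mathrm{Mat}(1\times n,\mathbb C)$, $W_{s,\alpha}\in\mathrm{Mat}(n\times1,\mathbb C)$, with $\mathrm{Id}_n+X_sY_s$, $\mathrm{Id}_n+Y_sX_s$,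 $\mathrm{Id}_n+W_{s,\alpha}V_{s,\alpha}$ invertible and $1+V_{s,\alpha}W_{s,\alpha}\ne0$. For $b\in\{0,\dots,|\mathbf d|\}$ and $s\in\mathbb Z_m$ define the matrix-valued function $\Phi^{(b)}_s=(\mathrm{Id}_n+X_sY_s)(\mathrm{Id}_n+Y_{s-1}X_{s-1})^{-1}\prod_{\alpha:\,(s,\alpha)\le\rho(b)}^{\rightarrow}(\mathrm{Id}_n+W_{s,\alpha}V_{s,\alpha})^{-1}$, the product taken over increasing $\alpha$ from left to right (empty product $=\mathrm{Id}_n$). The quasi-Poisson bracket $\{-,-\}$ on $\mathcal M^\bullet$ is the antisymmetric biderivation given on entry functions by ($o(s,r)=\operatorname{sgn}(r-s)$ computed in $\{0,\dots,m-1\}$, $o(\alpha,\beta)=\operatorname{sgn}(\beta-\alpha)$): $\{(X_r)_{ij},(X_s)_{kl}\}=\tfrac12\delta_{s,r-1}(X_{r-1}X_r)_{kj}\delta_{il}-\tfrac12\delta_{s,r+1}\delta_{kj}(X_rX_{r+1})_{il}$; $\{(Y_r)_{ij},(Y_s)_{kl}\}=\tfrac12\delta_{s,r-1}\delta_{kj}(Y_rY_{r-1})_{il}-\tfrac12\delta_{s,r+1}(Y_{r+1}Y_r)_{kj}\delta_{il}$; $\{(X_r)_{ij},(Y_s)_{kl}\}=\delta_{sr}\big(\delta_{kj}\delta_{il}+\tfrac12(Y_rX_r)_{kj}\delta_{il}+\tfrac12\delta_{kj}(X_rY_r)_{il}\big)-\tfrac12\delta_{s,r-1}(X_r)_{kj}(Y_{r-1})_{il}+\tfrac12\delta_{s,r+1}(Y_{r+1})_{kj}(X_r)_{il}$;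 $\{(X_r)_{ij},(W_{s,\alpha})_k\}=\tfrac12\delta_{s,r+1}\delta_{kj}(X_rW_{r+1,\alpha})_i-\tfrac12\delta_{rs}(X_r)_{kj}(W_{r,\alpha})_i$; $\{(X_r)_{ij},(V_{s,\alpha})_l\}=\tfrac12\delta_{rs}(V_{r,\alpha}X_r)_j\delta_{il}-\tfrac12\delta_{s,r+1}(V_{r+1,\alpha})_j(X_r)_{il}$; $\{(Y_r)_{ij},(W_{s,\alpha})_k\}=\tfrac12\delta_{rs}\delta_{kj}(Y_rW_{r,\alpha})_i-\tfrac12\delta_{s,r+1}(Y_r)_{kj}(W_{r+1,\alpha})_i$; $\{(Y_r)_{ij},(V_{s,\alpha})_l\}=\tfrac12\delta_{s,r+1}(V_{r+1,\alpha}Y_r)_j\delta_{il}-\tfrac12\delta_{rs}(V_{r,\alpha})_j(Y_r)_{il}$; $\{(V_{s,\alpha})_j,(V_{r,\beta})_l\}=-\tfrac12o(s,r)(V_{s,\alpha})_j(V_{r,\beta})_l-\tfrac12\delta_{sr}o(\alpha,\beta)\big((V_{r,\beta})_j(V_{s,\alpha})_l+(V_{s,\alpha})_j(V_{r,\beta})_l\big)$; $\{(W_{s,\alpha})_i,(W_{r,\beta})_k\}=-\tfrac12o(s,r)(W_{r,\beta})_k(W_{s,\alpha})_i-\tfrac12\delta_{sr}o(\alpha,\beta)\big((W_{r,\beta})_k(W_{s,\alpha})_i+(W_{s,\alpha})_k(W_{r,\beta})_i\big)$; $\{(V_{s,\alpha})_j,(W_{r,\beta})_k\}=\tfrac12o(s,r)(W_{r,\beta})_k(V_{s,\alpha})_j+\delta_{sr}\delta_{\alpha\beta}\big(\delta_{kj}+\tfrac12(W_{r,\beta})_k(V_{s,\alpha})_j+\tfrac12\delta_{kj}V_{s,\alpha}W_{r,\beta}\big)+\tfrac12\delta_{sr}o(\alpha,\beta)\big(\delta_{kj}V_{s,\alpha}W_{r,\beta}+(W_{r,\beta})_k(V_{s,\alpha})_j\big)$.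 *)

(* Defs.v *)
From HB Require Import structures.
From mathcomp Require Import all_boot all_order all_algebra.
Set Implicit Arguments. Unset Strict Implicit. Unset Printing Implicit Defensive.
Import Order.TTheory GRing.Theory Num.Theory.
Local Open Scope ring_scope.

(* Z_m is modelled by 'I_m; r+1 and r-1 mod m are ordS / ord_pred. *)
Notation zsucc := (@ordS _).
Notation zpred := (@ord_pred _).

Section Defs.
Variable A : comUnitRingType.

Definition dl (b : bool) : A := (b : nat)%:R.
Definition halfA : A := (2%:R)^-1.
Definition osgn (x y : nat) : A :=
  if (x < y)%N then 1 else if (y < x)%N then -1 else 0.

Variables (m n : nat) (d : 'I_m -> nat).

Definition dsum : nat := (\sum_(t < m) d t)%N.

(* Spin indices (s, alpha) with alpha : 'I_(d s) the 0-based version of the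
   paper's 1 <= alpha <= d_s.  rho is the order-preserving bijection onto
   {1,..,|d|}; its inverse sends (s,alpha) to spin_pos s alpha.  Hence
   (s,alpha) <= rho(b)  iff  spin_pos s alpha <= b  (for b = 0 nothing). *)
Definition spin_pos (s : 'I_m) (a : 'I_(d s)) : nat :=
  ((\sum_(t < m | (t < s)%N) d t) + a + 1)%N.
Definition spin_le_rho (s : 'I_m) (a : 'I_(d s)) (b : nat) : bool :=
  (spin_pos a <= b)%N.

Variables (X Y : 'I_m -> 'M[A]_n)
          (V : forall s : 'I_m, 'I_(d s) -> 'rV[A]_n)
          (W : forall s : 'I_m, 'I_(d s) -> 'cV[A]_n).

Definition Phi (b : nat) (s : 'I_m) : 'M[A]_n :=
  (1%:M + X s *m Y s) *m invmx (1%:M + Y (zpred s) *m X (zpred s)) *m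
  \big[mulmx/1%:M]_(a < d s | spin_le_rho a b) invmx (1%:M + W a *m V a).

Definition in_Mbullet : Prop :=
  (forall s, (1%:M + X s *m Y s) \in unitmx) /\
  (forall s, (1%:M + Y s *m X s) \in unitmx) /\
  (forall s (a : 'I_(d s)), (1%:M + W a *m V a) \in unitmx) /\
  (forall s (a : 'I_(d s)), (1 + (V a *m W a) 0 0) \is a GRing.unit).

Definition antisym_biderivation (br : A -> A -> A) : Prop :=
  (forall f g, br f g = - br g f) /\
  (forall f g h, br (f + g) h = br f h + br g h) /\
  (forall f g h, br (f * g) h = f * br g h + br f h * g).

Definition qP_brackets (br : A -> A -> A) : Prop :=
  (forall r s i j k l,
     br (X r i j) (X s k l) =
       halfA * dl (s == zpred r) * (X (zpred r) *m X r) k j * dl (i == l)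
     - halfA * dl (s == zsucc r) * dl (k == j) * (X r *m X (zsucc r)) i l) /\
  (forall r s i j k l,
     br (Y r i j) (Y s k l) =
       halfA * dl (s == zpred r) * dl (k == j) * (Y r *m Y (zpred r)) i l
     - halfA * dl (s == zsucc r) * (Y (zsucc r) *m Y r) k j * dl (i == l)) /\
  (forall r s i j k l,
     br (X r i j) (Y s k l) =
       dl (s == r) * (dl (k == j) * dl (i == l)
                      + halfA * (Y r *m X r) k j * dl (i == l)
                      + halfA * dl (k == j) * (X r *m Y r) i l)
     - halfA * dl (s == zpred r) * X r k j * Y (zpred r) i l
     + halfA * dl (s == zsucc r) * Y (zsucc r) k j * X r i l) /\
  (forall r s (a : 'I_(d s)) i j k,
     br (X r i j) (W a k 0) =
       halfA * dl (s == zsucc r) * dl (k == j) * (X r *m W a) i 0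
     - halfA * dl (r == s) * X r k j * W a i 0) /\
  (forall r s (a : 'I_(d s)) i j l,
     br (X r i j) (V a 0 l) =
       halfA * dl (r == s) * (V a *m X r) 0 j * dl (i == l)
     - halfA * dl (s == zsucc r) * V a 0 j * X r i l) /\
  (forall r s (a : 'I_(d s)) i j k,
     br (Y r i j) (W a k 0) =
       halfA * dl (r == s) * dl (k == j) * (Y r *m W a) i 0
     - halfA * dl (s == zsucc r) * Y r k j * W a i 0) /\
  (forall r s (a : 'I_(d s)) i j l,
     br (Y r i j) (V a 0 l) =
       halfA * dl (s == zsucc r) * (V a *m Y r) 0 j * dl (i == l)
     - halfA * dl (r == s) * V a 0 j * Y r i l) /\
  (forall s r (a : 'I_(d s)) (c : 'I_(d r)) j l,
     br (V a 0 j) (V c 0 l) =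
     - halfA * osgn s r * V a 0 j * V c 0 l
     - halfA * dl (s == r) * osgn a c * (V c 0 j * V a 0 l + V a 0 j * V c 0 l)) /\
  (forall s r (a : 'I_(d s)) (c : 'I_(d r)) i k,
     br (W a i 0) (W c k 0) =
     - halfA * osgn s r * W c k 0 * W a i 0
     - halfA * dl (s == r) * osgn a c * (W c k 0 * W a i 0 + W a k 0 * W c i 0)) /\
  (forall s r (a : 'I_(d s)) (c : 'I_(d r)) j k,
     br (V a 0 j) (W c k 0) =
       halfA * osgn s r * W c k 0 * V a 0 j
     + dl (s == r) * dl (nat_of_ord a == nat_of_ord c) *
         (dl (k == j) + halfA * W c k 0 * V a 0 j
          + halfA * dl (k == j) * (V a *m W c) 0 0)
     + halfA * dl (s == r) * osgn a c *
         (dl (k == j) * (V a *m W c) 0 0 + W c k 0 * V a 0 j)).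

End Defs.
Arguments dl {A} b.
Arguments halfA {A}.
Arguments osgn {A} x y.

(* Main.v *)
Require Import Defs.
From HB Require Import structures.
From mathcomp Require Import all_boot all_order all_algebra.
From mathcomp Require Import ring.
Import Order.TTheory GRing.Theory Num.Theory.
Local Open Scope ring_scope.
Set Implicit Arguments. Unset Strict Implicit. Unset Printing Implicit Defensive.

Section Tensor.
Variable A : comUnitRingType.
Variable n' : nat.
Local Notation n := n'.+1.
Variable br : A -> A -> A.
Hypothesis br_anti : forall f g, br f g = - br g f.
Hypothesis br_add : forall f g h, br (f + g) h = br f h + br g h.
Hypothesis br_mulr : forall f g h, br (f * g) h = f * br g h + br f h * g.

Lemma dbl0 (x : A) : x = x + x -> x = 0.
Proof. by move=> /(congr1 (fun y => y - x)); rewrite subrr addrK. Qed.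
Lemma br0 h : br 0 h = 0.
Proof. by apply: dbl0; rewrite -br_add addr0. Qed.
Lemma br1 h : br 1 h = 0.
Proof. apply: dbl0; have E := br_mulr 1 1 h; rewrite !mulr1 mul1r in E; exact: E. Qed.
Lemma brN f h : br (- f) h = - br f h.
Proof.
have := br_add f (- f) h; rewrite subrr br0 => /(congr1 (fun y => y - br f h)).
by rewrite add0r addrC addKr.
Qed.
Lemma brnat k h : br (k%:R) h = 0.
Proof. elim: k => [|k IH]; first by rewrite br0. by rewrite mulrS br_add br1 IH addr0. Qed.
Lemma br_sum I (r : seq I) (P : pred I) (F : I -> A) h :
  br (\sum_(i <- r | P i) F i) h = \sum_(i <- r | P i) br (F i) h.
Proof. exact: (big_morph (fun f => br f h) (fun f g => br_add f g h) (br0 h)). Qed.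
Lemma brid (i j : 'I_n) h : br ((1%:M : 'M[A]_n) i j) h = 0.
Proof. by rewrite mxE brnat. Qed.

Definition tens := 'I_n -> 'I_n -> 'I_n -> 'I_n -> A.
Definition BR (F G : 'M[A]_n) (T : tens) :=
  forall i j k l, br (F i j) (G k l) = T i j k l.
Definition ev (L : seq (A * 'M[A]_n * 'M[A]_n)) : tens :=
  fun i j k l => \sum_(x <- L) x.1.1 * (x.1.2 k j * x.2 i l).
Definition lmul (F : 'M[A]_n) (L : seq (A * 'M[A]_n * 'M[A]_n)) :=
  [seq (x.1.1, x.1.2, F *m x.2) | x <- L].
Definition rmul (L : seq (A * 'M[A]_n * 'M[A]_n)) (F : 'M[A]_n) :=
  [seq (x.1.1, x.1.2 *m F, x.2) | x <- L].

Lemma BR_ext F G T T' : BR F G T -> (forall i j k l, T i j k l = T' i j k l) -> BR F G T'.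
Proof. by move=> H E i j k l; rewrite H E. Qed.

Lemma BR_mulg F1 F2 G T1 T2 : BR F1 G T1 -> BR F2 G T2 ->
  BR (F1 *m F2) G (fun i j k l => \sum_m (F1 i m * T2 m j k l + T1 i m k l * F2 m j)).
Proof.
move=> H1 H2 i j k l; rewrite mxE br_sum; apply: eq_bigr => m _.
by rewrite br_mulr H1 H2.
Qed.

Lemma ev_lmul (F : 'M[A]_n) L (i j k l : 'I_n) :
  \sum_m F i m * ev L m j k l = ev (lmul F L) i j k l.
Proof.
rewrite /ev big_map.
transitivity (\sum_m \sum_(x <- L) F i m * (x.1.1 * (x.1.2 k j * x.2 m l))).
  by apply: eq_bigr => m _; rewrite big_distrr.
rewrite exchange_big /=; apply: eq_bigr => x _; rewrite mxE !big_distrr.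
apply: eq_bigr => m _ /=; ring.
Qed.

Lemma ev_rmul (F : 'M[A]_n) L (i j k l : 'I_n) :
  \sum_m ev L i m k l * F m j = ev (rmul L F) i j k l.
Proof.
rewrite /ev big_map.
transitivity (\sum_m \sum_(x <- L) (x.1.1 * (x.1.2 k m * x.2 i l)) * F m j).
  by apply: eq_bigr => m _; rewrite big_distrl.
rewrite exchange_big /=; apply: eq_bigr => x _; rewrite mxE big_distrl /= !big_distrr.
apply: eq_bigr => m _ /=; ring.
Qed.

Lemma ev_cat L1 L2 i j k l : ev (L1 ++ L2) i j k l = ev L1 i j k l + ev L2 i j k l.
Proof. by rewrite /ev big_cat. Qed.

Lemma BR_mul F1 F2 G L1 L2 : BR F1 G (ev L1) -> BR F2 G (ev L2) ->
  BR (F1 *m F2) G (ev (lmul F1 L2 ++ rmul L1 F2)).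
Proof.
move=> H1 H2; apply: (BR_ext (BR_mulg H1 H2)) => i j k l.
by rewrite big_split /= ev_lmul ev_rmul ev_cat.
Qed.

Lemma BR_1p F G T : BR F G T -> BR (1%:M + F) G T.
Proof. by move=> H i j k l; rewrite [X in br X _]mxE br_add brid add0r H. Qed.


Lemma eD (P Q : 'M[A]_n) i j : (P + Q) i j = P i j + Q i j.
Proof. by rewrite mxE. Qed.
Lemma eN (P : 'M[A]_n) i j : (- P) i j = - P i j.
Proof. by rewrite mxE. Qed.
Lemma eZ c (P : 'M[A]_n) i j : (c *: P) i j = c * P i j.
Proof. by rewrite mxE. Qed.

Definition form (a a' b b' : A) (F G : 'M[A]_n) : tens :=
  ev [:: (halfA * a, G, F); (halfA * a', G *m F, 1%:M);
         (- (halfA * b), 1%:M, F *m G); (- (halfA * b'), F, G)].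

Ltac evsimp := rewrite /form /ev /lmul /rmul /= ?big_cat /= !big_cons !big_nil /=.

Lemma prodF F1 F2 G a1 a1' b1 b1' a2 b2 :
  BR F1 G (form a1 a1' b1 b1' F1 G) -> BR F2 G (form a2 (- a1) b2 (- b1) F2 G) ->
  BR (F1 *m F2) G (form a2 a1' b2 b1' (F1 *m F2) G).
Proof.
move=> H1 H2; apply: (BR_ext (BR_mul H1 H2)) => i j k l.
evsimp; rewrite !mulmxA !mulmx1 !mul1mx; ring.
Qed.

Lemma sum_id (p : 'I_n) (f : 'I_n -> A) : \sum_m (1%:M : 'M[A]_n) p m * f m = f p.
Proof.
rewrite (bigD1 p) //= big1 ?addr0; first by rewrite mxE eqxx mul1r.
by move=> m /negbTE nm; rewrite mxE eq_sym nm mul0r.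
Qed.

Lemma invF F G a a' b b' : F \in unitmx ->
  BR F G (form a a' b b' F G) ->
  BR (invmx F) G (form (- a') (- a) (- b') (- b) (invmx F) G).
Proof.
move=> uF H.
set Z : tens := fun i j k l => br (invmx F i j) (G k l).
have HZ : BR (invmx F) G Z by [].
have key : forall i j k l, \sum_m F i m * Z m j k l =
   - ev (rmul [:: (halfA * a, G, F); (halfA * a', G *m F, 1%:M);
         (- (halfA * b), 1%:M, F *m G); (- (halfA * b'), F, G)] (invmx F)) i j k l.
  move=> i j k l; have := BR_mulg H HZ i j k l.
  rewrite mulmxV // brid big_split /= ev_rmul => /(congr1 (fun y => y - ev (rmul
    [:: (halfA * a, G, F); (halfA * a', G *m F, 1%:M);
         (- (halfA * b), 1%:M, F *m G); (- (halfA * b'), F, G)] (invmx F)) i j k l)).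
  by rewrite add0r addrK.
move=> p j k l.
transitivity (\sum_i invmx F p i * (\sum_m F i m * Z m j k l)).
  transitivity (\sum_m (invmx F *m F) p m * Z m j k l).
    by rewrite mulVmx // sum_id.
  under eq_bigr do rewrite mxE big_distrl.
  rewrite exchange_big /=; apply: eq_bigr => i _; rewrite big_distrr /=.
  by apply: eq_bigr => m _; rewrite mulrA.
under eq_bigr do rewrite key mulrN.
rewrite sumrN ev_lmul.
evsimp; rewrite !mulmxA !mulmx1 !mul1mx !mulVmx // !mulmxV // !mulmxK // !mul1mx.
ring.
Qed.

Lemma onepF F G a b :
  BR F G (form a (- a) b (- b) F G) ->
  BR (1%:M + F) G (form a (- a) b (- b) (1%:M + F) G).
Proof.
move=> H; apply: (BR_ext (BR_1p H)) => i j k l.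
evsimp; rewrite !mulmxDl !mulmxDr !mulmx1 !mul1mx !eD; ring.
Qed.

Lemma idF G a b : BR 1%:M G (form a (- a) b (- b) 1%:M G).
Proof.
move=> i j k l; rewrite brid; evsimp; rewrite !mulmx1 !mul1mx; ring.
Qed.

Lemma swapF F G a a' b b' :
  BR F G (form a a' b b' F G) -> BR G F (form (- a) b a' (- b') G F).
Proof.
move=> H i j k l; rewrite br_anti H; evsimp; ring.
Qed.

End Tensor.

Section Main.
Variables (A : comUnitRingType) (m n' : nat).
Local Notation n := n'.+1.
Variable d : 'I_m -> nat.
Variables (X Y : 'I_m -> 'M[A]_n)
          (V : forall s : 'I_m, 'I_(d s) -> 'rV[A]_n)
          (W : forall s : 'I_m, 'I_(d s) -> 'cV[A]_n).
Variable br : A -> A -> A.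
Hypothesis two_unit : (2%:R : A) \is a GRing.unit.
Hypothesis hbr : antisym_biderivation br.
Hypothesis hgen : qP_brackets X Y V W br.
Hypothesis hM : in_Mbullet X Y V W.

HB.instance Definition _ := Monoid.isLaw.Build ('M[A]_n) 1%:M mulmx
  (@mulmxA A n n n n) (@mul1mx A n n) (@mulmx1 A n n).

Local Notation h := (halfA : A).
Local Notation BR := (BR br).

Lemma h2 : h + h = 1.
Proof. by rewrite -mulr2n -mulr_natr /halfA mulVr. Qed.

Lemma hx (x : A) : x = h * x + h * x.
Proof. by rewrite -mulrDl h2 mul1r. Qed.
Lemma dlT : dl true = 1 :> A. Proof. by []. Qed.
Lemma dlF : dl false = 0 :> A. Proof. by []. Qed.
Lemma e1 (i j : 'I_n) : (1%:M : 'M[A]_n) i j = dl (i == j).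
Proof. by rewrite mxE. Qed.
Lemma dl_sym (T : eqType) (x y : T) : dl (x == y) = dl (y == x) :> A.
Proof. by rewrite eq_sym. Qed.

Lemma eq_pred (r s : 'I_m) : (s == zpred r) = (r == zsucc s).
Proof. by apply/eqP/eqP => [->|->]; [rewrite ord_predK | rewrite ordSK]. Qed.
Lemma eq_succ (r s : 'I_m) : (s == zsucc r) = (r == zpred s).
Proof. by apply/eqP/eqP => [->|->]; [rewrite ordSK | rewrite ord_predK]. Qed.

Definition Vp s (a : 'I_(d s)) : 'M[A]_n :=
  \matrix_(i, j) (if i == ord0 then V a 0 j else 0).
Definition Wp s (a : 'I_(d s)) : 'M[A]_n :=
  \matrix_(i, j) (if j == ord0 then W a i 0 else 0).
Definition e00 : 'M[A]_n := \matrix_(i, j) (if (i == ord0) && (j == ord0) then 1 else 0).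

Lemma VpE s (a : 'I_(d s)) i j : Vp a i j = if i == ord0 then V a 0 j else 0.
Proof. by rewrite mxE. Qed.
Lemma WpE s (a : 'I_(d s)) i j : Wp a i j = if j == ord0 then W a i 0 else 0.
Proof. by rewrite mxE. Qed.
Lemma e00E i j : e00 i j = if (i == ord0) && (j == ord0) then 1 else 0.
Proof. by rewrite mxE. Qed.
Lemma mulVpE p s (a : 'I_(d s)) (M : 'M[A]_(n, p)) i j :
  (Vp a *m M) i j = if i == ord0 then (V a *m M) 0 j else 0.
Proof.
rewrite mxE; case: (eqVneq i ord0) => [->|/negbTE ni].
  by rewrite mxE; apply: eq_bigr => k _; rewrite mxE.
by rewrite big1 // => k _; rewrite mxE ni mul0r.
Qed.
Lemma mulWpE p s (a : 'I_(d s)) (M : 'M[A]_(p, n)) i j :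
  (M *m Wp a) i j = if j == ord0 then (M *m W a) i 0 else 0.
Proof.
rewrite mxE; case: (eqVneq j ord0) => [->|/negbTE nj].
  by rewrite mxE; apply: eq_bigr => k _; rewrite mxE.
by rewrite big1 // => k _; rewrite mxE nj mulr0.
Qed.
Lemma WpVp s r (a : 'I_(d s)) (c : 'I_(d r)) : Wp a *m Vp c = W a *m V c.
Proof.
apply/matrixP => i j; rewrite !mxE (bigD1 ord0) //= big1 ?addr0.
  by rewrite big_ord1 !mxE !eqxx.
by move=> k /negbTE nk; rewrite !mxE nk mul0r.
Qed.
Lemma VpWpE s r (a : 'I_(d s)) (c : 'I_(d r)) i j :
  (Vp a *m Wp c) i j = if (i == ord0) && (j == ord0) then (V a *m W c) 0 0 else 0.
Proof.
rewrite mulVpE; case: (i == ord0) => //=.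
by rewrite mulWpE /=; case: (j == ord0) => //=; rewrite !mxE; apply: eq_bigr => k _; rewrite mxE.
Qed.
Lemma e00Vp s (a : 'I_(d s)) : e00 *m Vp a = Vp a.
Proof.
apply/matrixP => i j; rewrite !mxE (bigD1 ord0) //= big1 ?addr0.
  by rewrite !mxE !eqxx andbT; case: (i == ord0); rewrite ?mul1r ?mul0r.
by move=> k /negbTE nk; rewrite !mxE nk mulr0.
Qed.
Lemma Wpe00 s (a : 'I_(d s)) : Wp a *m e00 = Wp a.
Proof.
apply/matrixP => i j; rewrite !mxE (bigD1 ord0) //= big1 ?addr0.
  by rewrite !mxE !eqxx /=; case: (j == ord0); rewrite ?mulr1 ?mulr0.
by move=> k /negbTE nk; rewrite !mxE nk mul0r.
Qed.

Lemma dsubst (x y : 'I_m) (f : 'I_m -> A) : dl (x == y) * f y = dl (x == y) * f x.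
Proof. by case: eqVneq => [->|_]; rewrite ?dlF ?mul0r. Qed.

Lemma brx0 x : br x 0 = 0.
Proof. have [ban [badd bmul]] := hbr; by rewrite ban br0 ?oppr0. Qed.
Lemma br0x x : br 0 x = 0.
Proof. have [ban [badd bmul]] := hbr; by rewrite br0. Qed.

Lemma mulWV s r (a : 'I_(d s)) (c : 'I_(d r)) i l : (W a *m V c) i l = W a i 0 * V c 0 l.
Proof. by rewrite mxE big_ord1. Qed.

Ltac pre := move=> i j k l;
  have [hXX [hYY [hXY [hXW [hXV [hYW [hYV [hVV [hWW hVW]]]]]]]]] := hgen;
  have [ban [badd bmul]] := hbr.
Ltac evs := rewrite /ev !big_cons big_nil /= ?e1.

Lemma aXX s r : BR (X s) (X r)
  (ev [:: (h * dl (r == zpred s), X r *m X s, 1%:M);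
          (- (h * dl (r == zsucc s)), 1%:M, X s *m X r)]).
Proof.
pre; rewrite hXX; evs.
have /= E1 := dsubst r (zpred s) (fun t => (X t *m X s) k j).
have /= E2 := dsubst r (zsucc s) (fun t => (X s *m X t) i l).
move: E1 E2; set D1 := dl _; set D2 := dl _; set D3 := dl _; set D4 := dl _; move=> E1 E2. ring: E1 E2.
Qed.

Lemma aYX s r : BR (Y s) (X r)
  (ev [:: (- (h * dl (r == s)), 1%:M, 1%:M); (- (h * dl (r == s)), 1%:M, 1%:M); (- (h * dl (r == s)), 1%:M, Y s *m X r);
          (- (h * dl (r == s)), X r *m Y s, 1%:M); (h * dl (r == zsucc s), Y s, X r);
          (- (h * dl (r == zpred s)), X r, Y s)]).
Proof.
pre; rewrite ban hXY (eq_pred r s) (eq_succ r s) [s == r]eq_sym; evs.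
rewrite [dl (i == l) * dl (k == j)]hx.
have /= E3 := dsubst r (zsucc s) (fun t => Y (zpred t) k j); rewrite ordSK in E3.
have /= E4 := dsubst r (zpred s) (fun t => Y (zsucc t) i l); rewrite ord_predK in E4.
case: (eqVneq r s) => [Hc|Hc]; rewrite ?dlT ?dlF; first last.
  ring: E3 E4.
rewrite -Hc. rewrite -Hc in E3 E4. ring: E3 E4.
Qed.

Lemma aWpX s (a : 'I_(d s)) r : BR (Wp a) (X r)
  (ev [:: (- (h * dl (r == zpred s)), X r *m Wp a, 1%:M); (h * dl (r == s), Wp a, X r)]).
Proof.
pre; evs; rewrite !WpE !mulWpE; case: (eqVneq j ord0) => [_|_] /=.
  rewrite ban hXW (eq_succ r s); ring.
by rewrite br0x; ring.
Qed.

Lemma aVpX s (a : 'I_(d s)) r : BR (Vp a) (X r)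
  (ev [:: (- (h * dl (r == s)), 1%:M, Vp a *m X r); (h * dl (r == zpred s), X r, Vp a)]).
Proof.
pre; evs; rewrite !VpE !mulVpE; case: (eqVneq i ord0) => [_|_] /=.
  rewrite ban hXV (eq_succ r s); ring.
by rewrite br0x; ring.
Qed.

Lemma aXY s r : BR (X s) (Y r)
  (ev [:: (h * dl (r == s), 1%:M, 1%:M); (h * dl (r == s), 1%:M, 1%:M); (h * dl (r == s), Y r *m X s, 1%:M);
          (h * dl (r == s), 1%:M, X s *m Y r); (- (h * dl (r == zpred s)), X s, Y r);
          (h * dl (r == zsucc s), Y r, X s)]).
Proof.
pre; rewrite hXY; evs.
rewrite {1}[dl (k == j) * dl (i == l)]hx.
have /= E3 := dsubst r (zpred s) (fun t => Y t i l).
have /= E4 := dsubst r (zsucc s) (fun t => Y t k j).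
case: (eqVneq r s) => [Hc|Hc]; rewrite ?dlT ?dlF; first last.
  ring: E3 E4.
rewrite -Hc; rewrite -Hc in E3 E4; ring: E3 E4.
Qed.

Lemma aYY s r : BR (Y s) (Y r)
  (ev [:: (h * dl (r == zpred s), 1%:M, Y s *m Y r);
          (- (h * dl (r == zsucc s)), Y r *m Y s, 1%:M)]).
Proof.
pre; rewrite hYY; evs.
have /= E1 := dsubst r (zpred s) (fun t => (Y s *m Y t) i l).
have /= E2 := dsubst r (zsucc s) (fun t => (Y t *m Y s) k j).
ring: E1 E2.
Qed.

Lemma aWpY s (a : 'I_(d s)) r : BR (Wp a) (Y r)
  (ev [:: (- (h * dl (r == s)), Y r *m Wp a, 1%:M); (h * dl (r == zpred s), Wp a, Y r)]).
Proof.
pre; evs; rewrite !WpE !mulWpE; case: (eqVneq j ord0) => [_|_] /=.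
  rewrite ban hYW (eq_succ r s); ring.
by rewrite br0x; ring.
Qed.

Lemma aVpY s (a : 'I_(d s)) r : BR (Vp a) (Y r)
  (ev [:: (- (h * dl (r == zpred s)), 1%:M, Vp a *m Y r); (h * dl (r == s), Y r, Vp a)]).
Proof.
pre; evs; rewrite !VpE !mulVpE; case: (eqVneq i ord0) => [_|_] /=.
  rewrite ban hYV (eq_succ r s); ring.
by rewrite br0x; ring.
Qed.

Lemma aXVp s r (c : 'I_(d r)) : BR (X s) (Vp c)
  (ev [:: (h * dl (r == s), Vp c *m X s, 1%:M); (- (h * dl (r == zsucc s)), Vp c, X s)]).
Proof.
pre; evs; rewrite !VpE !mulVpE; case: (eqVneq k ord0) => [_|_] /=.
  rewrite hXV [s == r]eq_sym; ring.
by rewrite brx0; ring.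
Qed.

Lemma aYVp s r (c : 'I_(d r)) : BR (Y s) (Vp c)
  (ev [:: (h * dl (r == zsucc s), Vp c *m Y s, 1%:M); (- (h * dl (r == s)), Vp c, Y s)]).
Proof.
pre; evs; rewrite !VpE !mulVpE; case: (eqVneq k ord0) => [_|_] /=.
  rewrite hYV [s == r]eq_sym; ring.
by rewrite brx0; ring.
Qed.

Lemma aXWp s r (c : 'I_(d r)) : BR (X s) (Wp c)
  (ev [:: (h * dl (r == zsucc s), 1%:M, X s *m Wp c); (- (h * dl (r == s)), X s, Wp c)]).
Proof.
pre; evs; rewrite !WpE !mulWpE; case: (eqVneq l ord0) => [_|_] /=.
  rewrite hXW [s == r]eq_sym; ring.
by rewrite brx0; ring.
Qed.

Lemma aYWp s r (c : 'I_(d r)) : BR (Y s) (Wp c)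
  (ev [:: (h * dl (r == s), 1%:M, Y s *m Wp c); (- (h * dl (r == zsucc s)), Y s, Wp c)]).
Proof.
pre; evs; rewrite !WpE !mulWpE; case: (eqVneq l ord0) => [_|_] /=.
  rewrite hYW [s == r]eq_sym; ring.
by rewrite brx0; ring.
Qed.

Lemma aVpVp s (a : 'I_(d s)) r (c : 'I_(d r)) : BR (Vp a) (Vp c)
  (ev [:: (- (h * osgn s r), Vp a, Vp c); (- (h * dl (s == r) * osgn a c), Vp c, Vp a);
          (- (h * dl (s == r) * osgn a c), Vp a, Vp c)]).
Proof.
pre; evs; rewrite !VpE; case: (eqVneq i ord0) => [_|_] /=; last by rewrite br0x; ring.
case: (eqVneq k ord0) => [_|_] /=; last by rewrite brx0; ring.
rewrite hVV; ring.
Qed.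

Lemma aWpWp s (a : 'I_(d s)) r (c : 'I_(d r)) : BR (Wp a) (Wp c)
  (ev [:: (- (h * osgn s r), Wp c, Wp a); (- (h * dl (s == r) * osgn a c), Wp c, Wp a);
          (- (h * dl (s == r) * osgn a c), Wp a, Wp c)]).
Proof.
pre; evs; rewrite !WpE; case: (eqVneq j ord0) => [_|_] /=; last by rewrite br0x; ring.
case: (eqVneq l ord0) => [_|_] /=; last by rewrite brx0; ring.
rewrite hWW; ring.
Qed.

Lemma aWpVp s (a : 'I_(d s)) r (c : 'I_(d r)) : BR (Wp a) (Vp c)
  (ev [:: (- (h * osgn r s), e00, Wp a *m Vp c);
          (- (h * (dl (r == s) * dl (nat_of_ord c == nat_of_ord a))), e00, 1%:M);
          (- (h * (dl (r == s) * dl (nat_of_ord c == nat_of_ord a))), e00, 1%:M);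
          (- (h * (dl (r == s) * dl (nat_of_ord c == nat_of_ord a))), e00, Wp a *m Vp c);
          (- (h * (dl (r == s) * dl (nat_of_ord c == nat_of_ord a))), Vp c *m Wp a, 1%:M);
          (- (h * dl (r == s) * osgn c a), Vp c *m Wp a, 1%:M);
          (- (h * dl (r == s) * osgn c a), e00, Wp a *m Vp c)]).
Proof.
pre; evs; rewrite !WpE !VpE !e00E !VpWpE WpVp mulWV.
case: (eqVneq j ord0) => [_|_] /=; last by rewrite br0x ?andbF; ring.
case: (eqVneq k ord0) => [_|_] /=; last by rewrite brx0; ring.
rewrite ban hVW ?eqxx; rewrite [X in dl _ * dl _ * (X + _ + _)]hx; ring.
Qed.

Lemma aVpWp s (a : 'I_(d s)) r (c : 'I_(d r)) : BR (Vp a) (Wp c)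
  (ev [:: (h * osgn s r, Wp c *m Vp a, e00);
          (h * (dl (s == r) * dl (nat_of_ord a == nat_of_ord c)), 1%:M, e00);
          (h * (dl (s == r) * dl (nat_of_ord a == nat_of_ord c)), 1%:M, e00);
          (h * (dl (s == r) * dl (nat_of_ord a == nat_of_ord c)), Wp c *m Vp a, e00);
          (h * (dl (s == r) * dl (nat_of_ord a == nat_of_ord c)), 1%:M, Vp a *m Wp c);
          (h * dl (s == r) * osgn a c, 1%:M, Vp a *m Wp c);
          (h * dl (s == r) * osgn a c, Wp c *m Vp a, e00)]).
Proof.
pre; evs; rewrite !WpE !VpE !e00E !VpWpE WpVp mulWV.
case: (eqVneq i ord0) => [_|_] /=; last by rewrite br0x; ring.
case: (eqVneq l ord0) => [_|_] /=; last by rewrite brx0 ?andbF; ring.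
rewrite hVW ?eqxx; rewrite [X in dl _ * dl _ * (X + _ + _)]hx; ring.
Qed.

Lemma ban : forall f g, br f g = - br g f. Proof. by case: hbr. Qed.
Lemma badd : forall f g k, br (f + g) k = br f k + br g k. Proof. by case: hbr => _ []. Qed.
Lemma bmul : forall f g k, br (f * g) k = f * br g k + br f k * g. Proof. by case: hbr => _ []. Qed.
Definition BRmul := @BR_mul A n' br badd bmul.
Definition BR1p := @BR_1p A n' br badd bmul.
Definition prodF' := @prodF A n' br badd bmul.
Definition invF' := @invF A n' br badd bmul.
Definition onepF' := @onepF A n' br badd bmul.
Definition idF' := @idF A n' br badd bmul.
Definition swapF' := @swapF A n' br ban.

Ltac nrm := rewrite /form /ev /lmul /rmul /= ?big_cat /= !big_cons !big_nil /=;
  rewrite ?mulmxDl ?mulmxDr ?mulmxA ?mulmx1 ?mul1mx ?eD ?eN ?e1.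

Lemma fAX s r : BR (1%:M + X s *m Y s) (X r)
  (form (- dl (r == zpred s)) (dl (r == zpred s)) (dl (r == s)) (dl (r == s))
        (1%:M + X s *m Y s) (X r)).
Proof.
apply: (BR_ext (BR1p (BRmul (aXX s r) (aYX s r)))) => i j k l; nrm.
have H2 := h2.
case: (eqVneq r s) => [Hc|Hc]; rewrite ?dlT ?dlF; first last.
  ring.
rewrite -Hc; ring.
Qed.

Lemma fDX p r : BR (1%:M + Y p *m X p) (X r)
  (form (- dl (r == p)) (- dl (r == p)) (dl (r == zsucc p)) (- dl (r == zsucc p))
        (1%:M + Y p *m X p) (X r)).
Proof.
apply: (BR_ext (BR1p (BRmul (aYX p r) (aXX p r)))) => i j k l; nrm.
case: (eqVneq r p) => [Hc|Hc]; rewrite ?dlT ?dlF; first last.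
  ring.
rewrite -Hc; ring.
Qed.

Lemma fEX s (a : 'I_(d s)) r : BR (1%:M + Wp a *m Vp a) (X r)
  (form (dl (r == zpred s)) (- dl (r == zpred s)) (dl (r == s)) (- dl (r == s))
        (1%:M + Wp a *m Vp a) (X r)).
Proof.
apply: (BR_ext (BR1p (BRmul (aWpX a r) (aVpX a r)))) => i j k l; nrm.
ring.
Qed.

Lemma fAY s r : BR (1%:M + X s *m Y s) (Y r)
  (form (dl (r == s)) (dl (r == s)) (- dl (r == zpred s)) (dl (r == zpred s))
        (1%:M + X s *m Y s) (Y r)).
Proof.
apply: (BR_ext (BR1p (BRmul (aXY s r) (aYY s r)))) => i j k l; nrm.
case: (eqVneq r s) => [Hc|Hc]; rewrite ?dlT ?dlF; first last.
  ring.
rewrite -Hc; ring.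
Qed.

Lemma fDY p r : BR (1%:M + Y p *m X p) (Y r)
  (form (dl (r == zsucc p)) (- dl (r == zsucc p)) (- dl (r == p)) (- dl (r == p))
        (1%:M + Y p *m X p) (Y r)).
Proof.
apply: (BR_ext (BR1p (BRmul (aYY p r) (aXY p r)))) => i j k l; nrm.
case: (eqVneq r p) => [Hc|Hc]; rewrite ?dlT ?dlF; first last.
  ring.
rewrite -Hc; ring.
Qed.

Lemma fEY s (a : 'I_(d s)) r : BR (1%:M + Wp a *m Vp a) (Y r)
  (form (dl (r == s)) (- dl (r == s)) (dl (r == zpred s)) (- dl (r == zpred s))
        (1%:M + Wp a *m Vp a) (Y r)).
Proof.
apply: (BR_ext (BR1p (BRmul (aWpY a r) (aVpY a r)))) => i j k l; nrm.
ring.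
Qed.

Lemma fAV s r (c : 'I_(d r)) : BR (1%:M + X s *m Y s) (Vp c)
  (form (- dl (r == s)) (dl (r == s)) 0 0 (1%:M + X s *m Y s) (Vp c)).
Proof.
apply: (BR_ext (BR1p (BRmul (aXVp s c) (aYVp s c)))) => i j k l; nrm.
ring.
Qed.

Lemma fDV p r (c : 'I_(d r)) : BR (1%:M + Y p *m X p) (Vp c)
  (form (- dl (r == zsucc p)) (dl (r == zsucc p)) 0 0 (1%:M + Y p *m X p) (Vp c)).
Proof.
apply: (BR_ext (BR1p (BRmul (aYVp p c) (aXVp p c)))) => i j k l; nrm.
ring.
Qed.

Lemma fAW s r (c : 'I_(d r)) : BR (1%:M + X s *m Y s) (Wp c)
  (form 0 0 (- dl (r == s)) (dl (r == s)) (1%:M + X s *m Y s) (Wp c)).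
Proof.
apply: (BR_ext (BR1p (BRmul (aXWp s c) (aYWp s c)))) => i j k l; nrm.
ring.
Qed.

Lemma fDW p r (c : 'I_(d r)) : BR (1%:M + Y p *m X p) (Wp c)
  (form 0 0 (- dl (r == zsucc p)) (dl (r == zsucc p)) (1%:M + Y p *m X p) (Wp c)).
Proof.
apply: (BR_ext (BR1p (BRmul (aYWp p c) (aXWp p c)))) => i j k l; nrm.
ring.
Qed.

Lemma osgnC x y : osgn x y = - osgn y x :> A.
Proof.
rewrite /osgn; case: (ltngtP x y) => _ /=; rewrite ?opprK ?oppr0 //.
Qed.

Lemma fEV s (a : 'I_(d s)) r (c : 'I_(d r)) : BR (1%:M + Wp a *m Vp a) (Vp c)
  (form (- (dl (r == s) * osgn a c) - dl (r == s) * dl (nat_of_ord a == nat_of_ord c))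
        (dl (r == s) * osgn a c - dl (r == s) * dl (nat_of_ord a == nat_of_ord c)) 0 0
        (1%:M + Wp a *m Vp a) (Vp c)).
Proof.
apply: (BR_ext (BR1p (BRmul (aWpVp a c) (aVpVp a c)))) => i j k l; nrm.
rewrite ?e00Vp (osgnC r s) (osgnC c a) [s == r]eq_sym [nat_of_ord c == _]eq_sym.
case: (eqVneq r s) => [Hc|Hc]; rewrite ?dlT ?dlF; first last.
  ring.
subst r.
case: (eqVneq (nat_of_ord a) (nat_of_ord c)) => [Hac|Hac]; rewrite ?dlT ?dlF; first last.
  ring.
have Eac : a = c by apply: val_inj.
subst c; ring.
Qed.

Lemma fEW s (a : 'I_(d s)) r (c : 'I_(d r)) : BR (1%:M + Wp a *m Vp a) (Wp c)
  (form 0 0 (- (dl (r == s) * dl (nat_of_ord a == nat_of_ord c)) - dl (r == s) * osgn a c)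
        (- (dl (r == s) * dl (nat_of_ord a == nat_of_ord c)) + dl (r == s) * osgn a c)
        (1%:M + Wp a *m Vp a) (Wp c)).
Proof.
apply: (BR_ext (BR1p (BRmul (aWpWp a c) (aVpWp a c)))) => i j k l; nrm.
rewrite ?Wpe00 [s == r]eq_sym.
case: (eqVneq r s) => [Hc|Hc]; rewrite ?dlT ?dlF; first last.
  ring.
subst r.
case: (eqVneq (nat_of_ord a) (nat_of_ord c)) => [Hac|Hac]; rewrite ?dlT ?dlF; first last.
  ring.
have Eac : a = c by apply: val_inj.
subst c; ring.
Qed.

Lemma retype (F G : 'M[A]_n) a a' b b' x x' y y' : BR F G (form a a' b b' F G) ->
  a = x -> a' = x' -> b = y -> b' = y' -> BR F G (form x x' y y' F G).
Proof. by move=> H Ea Ea' Eb Eb'; rewrite -Ea -Ea' -Eb -Eb'. Qed.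

Lemma chainF N F0 (g : 'I_N -> 'M[A]_n) G a0 a0' b0 b0' (ta ta' tb tb' : nat -> A) :
  BR F0 G (form a0 a0' b0 b0' F0 G) ->
  (forall t : 'I_N, BR (g t) G (form (ta t) (ta' t) (tb t) (tb' t) (g t) G)) ->
  (forall t : nat, (t < N)%N ->
      ta' t = - (if t is t'.+1 then ta t' else a0) /\
      tb' t = - (if t is t'.+1 then tb t' else b0)) ->
  BR (F0 *m \big[mulmx/1%:M]_(t < N) g t) G
     (form (if N is N'.+1 then ta N' else a0) a0' (if N is N'.+1 then tb N' else b0) b0'
           (F0 *m \big[mulmx/1%:M]_(t < N) g t) G).
Proof.
move=> H0; elim: N g => [|N IH] g Hg Hc.
  by rewrite big_ord0 mulmx1.
rewrite big_ord_recr /= mulmxA.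
have IH' := IH (fun t => g (widen_ord (leqnSn N) t)) (fun t => Hg _)
  (fun t lt => Hc t (ltnW lt)).
have [E1 E2] := Hc N (ltnSn N).
have Hm := Hg ord_max; rewrite /= E1 E2 in Hm.
have := prodF' IH' Hm.
by case: N {IH IH' Hm E1 E2 Hc Hg} g.
Qed.

Lemma uD p : (1%:M + Y p *m X p) \in unitmx.
Proof. by case: hM => _ [H _]. Qed.
Lemma uE s (t : 'I_(d s)) : (1%:M + Wp t *m Vp t) \in unitmx.
Proof. by case: hM => _ [_ [H _]]; rewrite WpVp. Qed.

Definition gE b s (t : 'I_(d s)) : 'M[A]_n :=
  if spin_le_rho t b then invmx (1%:M + Wp t *m Vp t) else 1%:M.

Lemma PhiE b s : Phi X Y V W b s =
  (1%:M + X s *m Y s) *m invmx (1%:M + Y (zpred s) *m X (zpred s)) *m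
  \big[mulmx/1%:M]_(t < d s) gE b t.
Proof.
rewrite /Phi big_mkcond; congr (_ *m _); apply: eq_bigr => t _.
by rewrite /gE WpVp.
Qed.

Ltac rt H := apply: (retype H); rewrite ?opprK ?ord_predK ?oppr0 //.

Lemma PhiX b s r : BR (Phi X Y V W b s) (X r)
  (form (dl (r == zpred s)) (dl (r == zpred s)) (dl (r == s)) (dl (r == s))
        (Phi X Y V W b s) (X r)).
Proof.
rewrite PhiE.
have HA := fAX s r.
have HD := invF' (uD (zpred s)) (fDX (zpred s) r).
have HD' : BR (invmx (1%:M + Y (zpred s) *m X (zpred s))) (X r)
  (form (dl (r == zpred s)) (- - dl (r == zpred s)) (dl (r == s)) (- dl (r == s))
        (invmx (1%:M + Y (zpred s) *m X (zpred s))) (X r)) by rt HD.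
have HAD := prodF' HA HD'.
have Hg : forall t : 'I_(d s), BR (gE b t) (X r)
   (form (dl (r == zpred s)) (- dl (r == zpred s)) (dl (r == s)) (- dl (r == s)) (gE b t) (X r)).
  move=> t; rewrite /gE; case: ifP => _; last exact: idF'.
  have HE := invF' (uE t) (fEX t r); rt HE.
have HC := chainF (ta := fun _ => dl (r == zpred s)) (ta' := fun _ => - dl (r == zpred s))
  (tb := fun _ => dl (r == s)) (tb' := fun _ => - dl (r == s)) HAD Hg.
have HC' := HC (fun t _ => match t with 0 => conj erefl erefl | _.+1 => conj erefl erefl end).
rt HC'.
- by case: (d s).
- by case: (d s).
Qed.

Lemma PhiY b s r : BR (Phi X Y V W b s) (Y r)
  (form (dl (r == s)) (dl (r == s)) (dl (r == zpred s)) (dl (r == zpred s))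
        (Phi X Y V W b s) (Y r)).
Proof.
rewrite PhiE.
have HA := fAY s r.
have HD := invF' (uD (zpred s)) (fDY (zpred s) r).
have HD' : BR (invmx (1%:M + Y (zpred s) *m X (zpred s))) (Y r)
  (form (dl (r == s)) (- dl (r == s)) (dl (r == zpred s)) (- - dl (r == zpred s))
        (invmx (1%:M + Y (zpred s) *m X (zpred s))) (Y r)) by rt HD.
have HAD := prodF' HA HD'.
have Hg : forall t : 'I_(d s), BR (gE b t) (Y r)
   (form (dl (r == s)) (- dl (r == s)) (dl (r == zpred s)) (- dl (r == zpred s)) (gE b t) (Y r)).
  move=> t; rewrite /gE; case: ifP => _; last exact: idF'.
  have HE := invF' (uE t) (fEY t r); rt HE.
have HC := chainF (ta := fun _ => dl (r == s)) (ta' := fun _ => - dl (r == s))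
  (tb := fun _ => dl (r == zpred s)) (tb' := fun _ => - dl (r == zpred s)) HAD Hg.
have HC' := HC (fun t _ => match t with 0 => conj erefl erefl | _.+1 => conj erefl erefl end).
rt HC'.
- by case: (d s).
- by case: (d s).
Qed.

Lemma spin_eq b s (t c : 'I_(d s)) : nat_of_ord t = nat_of_ord c ->
  spin_le_rho t b = spin_le_rho c b.
Proof. by rewrite /spin_le_rho /spin_pos => ->. Qed.

Lemma PhiV b s r (c : 'I_(d r)) : spin_le_rho c b ->
  BR (Phi X Y V W b s) (Vp c)
  (form (dl (r == s)) (dl (r == s)) 0 0 (Phi X Y V W b s) (Vp c)).
Proof.
move=> Hcb; rewrite PhiE.
have HA := fAV s c.
have HD := invF' (uD (zpred s)) (fDV (zpred s) c).
have HD' : BR (invmx (1%:M + Y (zpred s) *m X (zpred s))) (Vp c)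
  (form (- dl (r == s)) (- - dl (r == s)) 0 (- 0)
        (invmx (1%:M + Y (zpred s) *m X (zpred s))) (Vp c)) by rt HD.
have HAD := prodF' HA HD'.
pose ta := fun t : nat => dl (r == s) * (if (t < c)%N then -1 else 1) : A.
pose ta' := fun t : nat => dl (r == s) * (if (t <= c)%N then 1 else -1) : A.
have Hg : forall t : 'I_(d s), BR (gE b t) (Vp c)
   (form (ta t) (ta' t) 0 (- 0) (gE b t) (Vp c)).
  move=> t; rewrite /gE /ta /ta'; case: ifP => Ht.
    have HE := invF' (uE t) (fEV t c); rt HE;
    rewrite /osgn; case: (ltngtP t c) => _; rewrite ?dlT ?dlF /=; ring.
  apply: (retype (idF' (Vp c) (dl (r == s) * (if (t < c)%N then -1 else 1)) 0)) => //.
  case: (eqVneq r s) => [Ers|Ers]; rewrite ?dlT ?dlF; first last.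
    ring.
  subst r; case: (ltngtP t c) => Htc /=; try ring.
  by rewrite (spin_eq b Htc) Hcb in Ht.
have HC := chainF (ta := ta) (ta' := ta') (tb := fun _ => 0) (tb' := fun _ => - 0) HAD Hg.
have HC' : forall t : nat, (t < d s)%N ->
      ta' t = - (if t is t'.+1 then ta t' else - dl (r == s)) /\
      (- 0 : A) = - (if t is t'.+1 then (fun _ => 0) t' else 0).
  move=> t _; split; last by case: t.
  rewrite /ta /ta'; case: t => [|t] /=; first ring.
  by case: (t < c)%N; ring.
have HC2 := HC HC'.
rt HC2.
- rewrite /ta; case: (eqVneq r s) => [Ers|Ers]; rewrite ?dlT ?dlF; first last.
    by case: (d s) => *; ring.
  subst r; move: (ltn_ord c); move: (nat_of_ord c) => cc.
  case: (d s) => [|N'] //= lt; rewrite ltnNge -ltnS lt /=; ring.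
- by case: (d s).
Qed.

Lemma PhiW b s r (c : 'I_(d r)) : spin_le_rho c b ->
  BR (Phi X Y V W b s) (Wp c)
  (form 0 0 (dl (r == s)) (dl (r == s)) (Phi X Y V W b s) (Wp c)).
Proof.
move=> Hcb; rewrite PhiE.
have HA := fAW s c.
have HD := invF' (uD (zpred s)) (fDW (zpred s) c).
have HD' : BR (invmx (1%:M + Y (zpred s) *m X (zpred s))) (Wp c)
  (form 0 (- 0) (- dl (r == s)) (- - dl (r == s))
        (invmx (1%:M + Y (zpred s) *m X (zpred s))) (Wp c)) by rt HD.
have HAD := prodF' HA HD'.
pose tb := fun t : nat => dl (r == s) * (if (t < c)%N then -1 else 1) : A.
pose tb' := fun t : nat => dl (r == s) * (if (t <= c)%N then 1 else -1) : A.
have Hg : forall t : 'I_(d s), BR (gE b t) (Wp c)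
   (form 0 (- 0) (tb t) (tb' t) (gE b t) (Wp c)).
  move=> t; rewrite /gE /tb /tb'; case: ifP => Ht.
    have HE := invF' (uE t) (fEW t c); rt HE;
    rewrite /osgn; case: (ltngtP t c) => _; rewrite ?dlT ?dlF /=; ring.
  apply: (retype (idF' (Wp c) 0 (dl (r == s) * (if (t < c)%N then -1 else 1)))) => //.
  case: (eqVneq r s) => [Ers|Ers]; rewrite ?dlT ?dlF; first last.
    ring.
  subst r; case: (ltngtP t c) => Htc /=; try ring.
  by rewrite (spin_eq b Htc) Hcb in Ht.
have HC := chainF (ta := fun _ => 0) (ta' := fun _ => - 0) (tb := tb) (tb' := tb') HAD Hg.
have HC' : forall t : nat, (t < d s)%N ->
      (- 0 : A) = - (if t is t'.+1 then (fun _ => 0) t' else 0) /\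
      tb' t = - (if t is t'.+1 then tb t' else - dl (r == s)).
  move=> t _; split; first by case: t.
  rewrite /tb /tb'; case: t => [|t] /=; first ring.
  by case: (t < c)%N; ring.
have HC2 := HC HC'.
rt HC2.
- by case: (d s).
- rewrite /tb; case: (eqVneq r s) => [Ers|Ers]; rewrite ?dlT ?dlF; first last.
    by case: (d s) => *; ring.
  subst r; move: (ltn_ord c); move: (nat_of_ord c) => cc.
  case: (d s) => [|N'] //= lt; rewrite ltnNge -ltnS lt /=; ring.
Qed.

Lemma zpred_eq (r s : 'I_m) : (zpred r == zpred s) = (r == s).
Proof. exact: (inj_eq (@ord_pred_inj m)). Qed.

Lemma PhiPhi b c r s : (c < b)%N ->
  BR (Phi X Y V W b s) (Phi X Y V W c r)
  (form (dl (r == s)) (dl (r == s)) (dl (r == s)) (dl (r == s))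
        (Phi X Y V W b s) (Phi X Y V W c r)).
Proof.
move=> ltcb.
set P := Phi X Y V W b s.
pose dd := dl (r == s) : A.
have sX := fun p => swapF' (PhiX b s p).
have sY := fun p => swapF' (PhiY b s p).
have HA0 : BR (X r *m Y r) P (form (- dd) (- - dd) dd (- dd) (X r *m Y r) P).
  have H2 : BR (Y r) P (form (- dd) (- - dl (r == zpred s)) dd (- dl (r == zpred s)) (Y r) P)
    by rt (sY r).
  by rt (prodF' (sX r) H2).
have HA := onepF' HA0.
have HD0 : BR (Y (zpred r) *m X (zpred r)) P
    (form (- dd) (- - dd) dd (- dd) (Y (zpred r) *m X (zpred r)) P).
  have H2 : BR (X (zpred r)) P (form (- dl (zpred r == zpred s)) (- - dl (zpred r == s))
      (dl (zpred r == zpred s)) (- dl (zpred r == s)) (X (zpred r)) P)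
    by rt (sX (zpred r)).
  have H3 := prodF' (sY (zpred r)) H2.
  by rt H3; rewrite zpred_eq.
have HD1 := onepF' HD0.
have HD := invF' (uD (zpred r)) HD1.
have HD' : BR (invmx (1%:M + Y (zpred r) *m X (zpred r))) P
    (form (- dd) (- - dd) dd (- dd) (invmx (1%:M + Y (zpred r) *m X (zpred r))) P) by rt HD.
have HA' : BR (1%:M + X r *m Y r) P (form (- dd) (- - dd) dd (- dd) (1%:M + X r *m Y r) P)
  by rt HA.
have HAD := prodF' HA' HD'.
have Hg : forall t : 'I_(d r), BR (gE c t) P (form (- dd) (- - dd) dd (- dd) (gE c t) P).
  move=> t; rewrite /gE; case: ifP => Ht; last exact: idF'.
  have Htb : spin_le_rho t b.
    by move: Ht; rewrite /spin_le_rho => /leq_trans; apply; apply: ltnW.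
  have sW := swapF' (PhiW s Htb).
  have sV := swapF' (PhiV s Htb).
  have sV' : BR (Vp t) P (form (- dd) (- - 0) dd (- 0) (Vp t) P) by rt sV.
  have HE0 := prodF' sW sV'.
  have HE0' : BR (Wp t *m Vp t) P (form (- dd) (- - dd) dd (- dd) (Wp t *m Vp t) P) by rt HE0.
  have HE1 := onepF' HE0'.
  have HE := invF' (uE t) HE1.
  by rt HE.
have HC := chainF (ta := fun _ => - dd) (ta' := fun _ => - - dd) (tb := fun _ => dd) (tb' := fun _ => - dd) HAD Hg.
have HC' := HC (fun t _ => match t with 0 => conj erefl erefl | _.+1 => conj erefl erefl end).
have HS : BR (Phi X Y V W c r) P (form (- dd) dd dd (- dd) (Phi X Y V W c r) P).
  rewrite PhiE; rt HC'.
  - by case: (d r).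
  - by case: (d r).
have := swapF' HS.
by move=> H; rt H.
Qed.

Lemma main_sec b :
  (forall (r s : 'I_m) (i j k l : 'I_n),
     br (Phi X Y V W b s i j) (X r k l) =
       halfA * dl (zsucc r == s) *
         (X r k j * Phi X Y V W b s i l + (X r *m Phi X Y V W b s) k j * dl (i == l))
     - halfA * dl (r == s) *
         (dl (k == j) * (Phi X Y V W b s *m X r) i l + Phi X Y V W b s k j * X r i l)) /\
  (forall (r s : 'I_m) (i j k l : 'I_n),
     br (Phi X Y V W b s i j) (Y r k l) =
       halfA * dl (r == s) *
         (Y r k j * Phi X Y V W b s i l + (Y r *m Phi X Y V W b s) k j * dl (i == l))
     - halfA * dl (zsucc r == s) *
         (dl (k == j) * (Phi X Y V W b s *m Y r) i l + Phi X Y V W b s k j * Y r i l)) /\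
  (forall (s r : 'I_m) (c : 'I_(d r)), spin_le_rho c b ->
   forall (i j l : 'I_n),
     br (Phi X Y V W b s i j) (V c 0 l) =
       halfA * dl (r == s) *
         (V c 0 j * Phi X Y V W b s i l + (V c *m Phi X Y V W b s) 0 j * dl (i == l))) /\
  (forall (s r : 'I_m) (c : 'I_(d r)), spin_le_rho c b ->
   forall (i j k : 'I_n),
     br (Phi X Y V W b s i j) (W c k 0) =
     - halfA * dl (r == s) *
         (dl (k == j) * (Phi X Y V W b s *m W c) i 0 + Phi X Y V W b s k j * W c i 0)) /\
  (forall (c : nat), (c < b)%N -> forall (r s : 'I_m) (i j k l : 'I_n),
     br (Phi X Y V W b s i j) (Phi X Y V W c r k l) =
       halfA * dl (r == s) *
         (Phi X Y V W c r k j * Phi X Y V W b s i l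
          + (Phi X Y V W c r *m Phi X Y V W b s) k j * dl (i == l))
     - halfA * dl (r == s) *
         (dl (k == j) * (Phi X Y V W b s *m Phi X Y V W c r) i l
          + Phi X Y V W b s k j * Phi X Y V W c r i l)).
Proof.
split; [|split; [|split; [|split]]].
- move=> r s i j k l; rewrite (PhiX b s r i j k l) [zsucc r == s]eq_sym eq_succ.
  rewrite /form /ev !big_cons big_nil /= !e1; ring.
- move=> r s i j k l; rewrite (PhiY b s r i j k l) [zsucc r == s]eq_sym eq_succ.
  rewrite /form /ev !big_cons big_nil /= !e1; ring.
- move=> s r c Hc i j l; have := PhiV s Hc i j ord0 l.
  rewrite VpE eqxx => ->; rewrite /form /ev !big_cons big_nil /= !e1 VpE mulVpE eqxx; ring.
- move=> s r c Hc i j k; have := PhiW s Hc i j k ord0.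
  rewrite WpE eqxx => ->; rewrite /form /ev !big_cons big_nil /= !e1 !WpE !mulWpE ?eqxx; ring.
- move=> c Hc r s i j k l; rewrite (PhiPhi r s Hc i j k l).
  rewrite /form /ev !big_cons big_nil /= !e1; ring.
Qed.

End Main.

Theorem lemma3p7
  (A : comUnitRingType) (two_unit : (2%:R : A) \is a GRing.unit)
  (m n : nat) (hm : (2 <= m)%N) (hn : (1 <= n)%N)
  (d : 'I_m -> nat) (hd0 : forall t : 'I_m, nat_of_ord t = 0%N -> (1 <= d t)%N)
  (X Y : 'I_m -> 'M[A]_n)
  (V : forall s : 'I_m, 'I_(d s) -> 'rV[A]_n)
  (W : forall s : 'I_m, 'I_(d s) -> 'cV[A]_n)
  (hM : in_Mbullet X Y V W)
  (br : A -> A -> A)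
  (hbr : antisym_biderivation br)
  (hgen : qP_brackets X Y V W br)
  (b : nat) (hb : (b <= dsum d)%N) :
  (forall (r s : 'I_m) (i j k l : 'I_n),
     br (Phi X Y V W b s i j) (X r k l) =
       halfA * dl (zsucc r == s) *
         (X r k j * Phi X Y V W b s i l + (X r *m Phi X Y V W b s) k j * dl (i == l))
     - halfA * dl (r == s) *
         (dl (k == j) * (Phi X Y V W b s *m X r) i l + Phi X Y V W b s k j * X r i l)) /\
  (forall (r s : 'I_m) (i j k l : 'I_n),
     br (Phi X Y V W b s i j) (Y r k l) =
       halfA * dl (r == s) *
         (Y r k j * Phi X Y V W b s i l + (Y r *m Phi X Y V W b s) k j * dl (i == l))
     - halfA * dl (zsucc r == s) *
         (dl (k == j) * (Phi X Y V W b s *m Y r) i l + Phi X Y V W b s k j * Y r i l)) /\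
  (forall (s r : 'I_m) (c : 'I_(d r)), spin_le_rho c b ->
   forall (i j l : 'I_n),
     br (Phi X Y V W b s i j) (V r c 0 l) =
       halfA * dl (r == s) *
         (V r c 0 j * Phi X Y V W b s i l + (V r c *m Phi X Y V W b s) 0 j * dl (i == l))) /\
  (forall (s r : 'I_m) (c : 'I_(d r)), spin_le_rho c b ->
   forall (i j k : 'I_n),
     br (Phi X Y V W b s i j) (W r c k 0) =
     - halfA * dl (r == s) *
         (dl (k == j) * (Phi X Y V W b s *m W r c) i 0 + Phi X Y V W b s k j * W r c i 0)) /\
  (forall (c : nat), (c < b)%N -> forall (r s : 'I_m) (i j k l : 'I_n),
     br (Phi X Y V W b s i j) (Phi X Y V W c r k l) =
       halfA * dl (r == s) *
         (Phi X Y V W c r k j * Phi X Y V W b s i l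
          + (Phi X Y V W c r *m Phi X Y V W b s) k j * dl (i == l))
     - halfA * dl (r == s) *
         (dl (k == j) * (Phi X Y V W b s *m Phi X Y V W c r) i l
          + Phi X Y V W b s k j * Phi X Y V W c r i l)).
Proof.
case: n hn X Y V W hM hgen => [//|n'] _ X Y V W hM hgen.
exact: (main_sec two_unit hbr hgen hM b).
Qed.
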